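(* Let $\Pi$ be a finite simply laced diagram with labelling $\sigma:I\to V$ and let $\widetilde{\mathcal A}$ be a continuous $\mathrm{Spin}(2)$-amalgam with respect to $\Pi$ and $\sigma$. Then $\widetilde{\mathcal A}$ is isomorphic to the standard $\mathrm{Spin}(2)$-amalgam $\mathcal A(\Pi,\sigma,\mathrm{Spin}(2))$.
   Context: $\mathrm{Spin}(m)$ lives in the real Clifford algebra with $e_k^2=-1$, $e_ke_l=-e_le_k$; $\mathrm{Spin}(2)=\{\cos\alpha+\sin\alpha\,e_1e_2\}$; $\widetilde\varepsilon_{12},\widetilde\varepsilon_{23}:\mathrm{Spin}(2)\to\mathrm{Spin}(3)$ are $a+be_1e_2\mapsto a+be_1e_2$ and $a+be_1e_2\mapsto a+be_2e_3$; $\widetilde\iota_1(x)=(x,1)$, $\widetilde\iota_2(x)=(1,x)$ into $\mathrm{Spin}(2)\times\mathrm{Spin}(2)$. A $\mathrm{Spin}(2)$-amalgam with respect to $\Pi$ and $\sigma$ is a family of groups $G_{ij}$ ($i\ne j\in I$) with monomorphisms $\phi^i_{ij}:\mathrm{Spin}(2)\to G_{ij}$, where $G_{ij}=\mathrm{Spin}(3)$ if $\{i^\sigma,j^\sigma\}$ is an edge of $\Pi$ and $G_{ij}=\mathrm{Spin}(2)\times\mathrm{Spin}(2)$ otherwise, and for $i<j$ the images satisfy $\phi^i_{ij}(\mathrm{Spin}(2))=\widetilde\varepsilon_{12}(\mathrm{Spin}(2))$, $\phi^j_{ij}(\mathrm{Spin}(2))=\widetilde\varepsilon_{23}(\mathrm{Spin}(2))$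 (edge) resp. $=\widetilde\iota_1(\mathrm{Spin}(2)),\widetilde\iota_2(\mathrm{Spin}(2))$ (non-edge). It is continuous if all $\phi^i_{ij}$ are continuous. The standard one has $\phi^i_{ij}=\widetilde\varepsilon_{12},\phi^j_{ij}=\widetilde\varepsilon_{23}$ resp. $\widetilde\iota_1,\widetilde\iota_2$ for $i<j$. An isomorphism of amalgams is a permutation $\pi$ of $I$ with group isomorphisms $\alpha_{ij}:G_{ij}\to H_{\pi(i)\pi(j)}$ satisfying $\alpha_{ij}\circ\phi^i_{ij}=\psi^{\pi(i)}_{\pi(i)\pi(j)}$. *)

(* Defs.v *)
From Stdlib Require Import Reals Arith.
Open Scope R_scope.

(* Spin(2) inside the real Clifford algebra of R^2 (e_k^2 = -1,
   e_k e_l = - e_l e_k).  The pair (a,b) stands for a + b e1e2.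
   Since (e1e2)^2 = -1, the Clifford product is
   (a + b e1e2)(c + d e1e2) = (ac - bd) + (ad + bc) e1e2.
   Spin(2) = { cos t + sin t e1e2 } = { a + b e1e2 | a^2 + b^2 = 1 }.   *)
Definition C2 : Type := (R * R)%type.
Definition c2mul (x y : C2) : C2 :=
  (fst x * fst y - snd x * snd y, fst x * snd y + snd x * fst y).
Definition inSpin2 (x : C2) : Prop := fst x * fst x + snd x * snd x = 1.
Definition c2one : C2 := (1, 0).
Definition c2dist (x y : C2) : R := Rabs (fst x - fst y) + Rabs (snd x - snd y).

(* Even part of the real Clifford algebra of R^3:
   a + x e1e2 + y e2e3 + z e3e1.  The multiplication table follows from
   e_k^2 = -1 and anticommutation:  (e1e2)^2 = (e2e3)^2 = (e3e1)^2 = -1,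
   e2e3 * e3e1 = e1e2, e3e1 * e1e2 = e2e3, e1e2 * e2e3 = e3e1
   (and the products in reverse order are the negatives).
   Spin(3) = the elements of norm 1 of this even subalgebra.            *)
Record Ev3 := mkEv3 { s0 : R; s12 : R; s23 : R; s31 : R }.

Definition ev3mul (u v : Ev3) : Ev3 :=
  let a1 := s0 u in let r1 := s12 u in let p1 := s23 u in let q1 := s31 u in
  let a2 := s0 v in let r2 := s12 v in let p2 := s23 v in let q2 := s31 v in
  (* i = e2e3, j = e3e1, k = e1e2 ; ij = k, jk = i, ki = j *)
  mkEv3 (a1*a2 - p1*p2 - q1*q2 - r1*r2)
        (a1*r2 + p1*q2 - q1*p2 + r1*a2)
        (a1*p2 + p1*a2 + q1*r2 - r1*q2)
        (a1*q2 - p1*r2 + q1*a2 + r1*p2).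

Definition inSpin3 (u : Ev3) : Prop :=
  s0 u * s0 u + s12 u * s12 u + s23 u * s23 u + s31 u * s31 u = 1.

Definition ev3dist (u v : Ev3) : R :=
  Rabs (s0 u - s0 v) + Rabs (s12 u - s12 v) + Rabs (s23 u - s23 v)
  + Rabs (s31 u - s31 v).

(* A common ambient type for the two possible rank-2 groups:
   AQ u    : an element u of the even Clifford algebra of R^3 (for Spin(3));
   AP x y  : a pair (x,y) (for Spin(2) x Spin(2)).                       *)
Inductive Amb : Type :=
| AQ : Ev3 -> Amb
| AP : C2 -> C2 -> Amb.

(* The group G(b): Spin(3) if b = true (edge), Spin(2) x Spin(2) otherwise. *)
Definition inG (b : bool) (z : Amb) : Prop :=
  match z with
  | AQ u => b = true /\ inSpin3 u
  | AP x y => b = false /\ inSpin2 x /\ inSpin2 y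
  end.

(* Group multiplication (componentwise for pairs); mixed products never
   occur inside a group G(b) and are given a junk value. *)
Definition amul (z w : Amb) : Amb :=
  match z, w with
  | AQ u, AQ v => AQ (ev3mul u v)
  | AP x y, AP x' y' => AP (c2mul x x') (c2mul y y')
  | _, _ => AQ (mkEv3 0 0 0 0)
  end.

Definition adist (z w : Amb) : R :=
  match z, w with
  | AQ u, AQ v => ev3dist u v
  | AP x y, AP x' y' => c2dist x x' + c2dist y y'
  | _, _ => 1
  end.

Definition eps12 (x : C2) : Amb := AQ (mkEv3 (fst x) (snd x) 0 0).
Definition eps23 (x : C2) : Amb := AQ (mkEv3 (fst x) 0 (snd x) 0).
Definition iota1 (x : C2) : Amb := AP x c2one.
Definition iota2 (x : C2) : Amb := AP c2one x.

Definition mono_into (b : bool) (f : C2 -> Amb) : Prop :=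
  (forall x, inSpin2 x -> inG b (f x)) /\
  (forall x y, inSpin2 x -> inSpin2 y -> f (c2mul x y) = amul (f x) (f y)) /\
  (forall x y, inSpin2 x -> inSpin2 y -> f x = f y -> x = y).

Definition cont_on_Spin2 (f : C2 -> Amb) : Prop :=
  forall x, inSpin2 x -> forall eps, eps > 0 ->
    exists delta, delta > 0 /\
      forall y, inSpin2 y -> c2dist x y < delta -> adist (f x) (f y) < eps.

Definition same_image (f g : C2 -> Amb) : Prop :=
  forall z, (exists x, inSpin2 x /\ f x = z) <-> (exists x, inSpin2 x /\ g x = z).

Definition group_iso (b b' : bool) (a : Amb -> Amb) : Prop :=
  (forall z, inG b z -> inG b' (a z)) /\
  (forall z w, inG b z -> inG b w -> a (amul z w) = amul (a z) (a w)) /\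
  (forall z w, inG b z -> inG b w -> a z = a w -> z = w) /\
  (forall w, inG b' w -> exists z, inG b z /\ a z = w).

(* I = {0, ..., n-1} with its natural order.
   e i j = true iff {i^sigma, j^sigma} is an edge of Pi.
   Groups are indexed by unordered pairs: G_ij = G_ji = G(e i j).
   phi i j (for i <> j) is the monomorphism phi^i_{ij} : Spin(2) -> G_ij;
   so for i < j, phi i j = phi^i_{ij} and phi j i = phi^j_{ij}. *)
Definition is_Spin2_amalgam (n : nat) (e : nat -> nat -> bool)
    (phi : nat -> nat -> C2 -> Amb) : Prop :=
  forall i j, (i < j)%nat -> (j < n)%nat ->
    mono_into (e i j) (phi i j) /\ mono_into (e i j) (phi j i) /\
    (if e i j then same_image (phi i j) eps12 /\ same_image (phi j i) eps23
     else same_image (phi i j) iota1 /\ same_image (phi j i) iota2).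

Definition continuous_amalgam (n : nat) (phi : nat -> nat -> C2 -> Amb) : Prop :=
  forall i j, (i < n)%nat -> (j < n)%nat -> i <> j -> cont_on_Spin2 (phi i j).

Definition std_amalgam (e : nat -> nat -> bool) (i j : nat) : C2 -> Amb :=
  if Nat.ltb i j then (if e i j then eps12 else iota1)
  else (if e j i then eps23 else iota2).

Definition is_perm (n : nat) (p : nat -> nat) : Prop :=
  (forall i, (i < n)%nat -> (p i < n)%nat) /\
  (forall i j, (i < n)%nat -> (j < n)%nat -> p i = p j -> i = j).

Definition amalgam_iso (n : nat) (e : nat -> nat -> bool)
    (phi psi : nat -> nat -> C2 -> Amb) : Prop :=
  exists (p : nat -> nat) (alpha : nat -> nat -> Amb -> Amb),
    is_perm n p /\
    forall i j, (i < j)%nat -> (j < n)%nat ->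
      group_iso (e i j) (e (p i) (p j)) (alpha i j) /\
      (forall x, inSpin2 x -> alpha i j (phi i j x) = psi (p i) (p j) x) /\
      (forall x, inSpin2 x -> alpha i j (phi j i x) = psi (p j) (p i) x).

(* Main.v *)
Require Import Defs.
From Stdlib Require Import Reals Arith Lra Lia ZArith Ranalysis5 IndefiniteDescription.
Open Scope R_scope.

Definition S2 := inSpin2.
Definition conj2 (x : C2) : C2 := (fst x, - snd x).
Definition E (t : R) : C2 := (cos t, sin t).
Definition m1 : C2 := (-1, 0).
Definition ii : C2 := (0, 1).

Lemma c2eq (x y : C2) : fst x = fst y -> snd x = snd y -> x = y.
Proof. destruct x, y; simpl; intros; subst; reflexivity. Qed.

Lemma c2mul_comm x y : c2mul x y = c2mul y x.
Proof. apply c2eq; unfold c2mul; simpl; ring. Qed.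

Lemma S2_mul x y : S2 x -> S2 y -> S2 (c2mul x y).
Proof.
  destruct x as [a b], y as [c d]; unfold S2, inSpin2, c2mul; simpl; intros H1 H2.
  replace ((a * c - b * d) * (a * c - b * d) + (a * d + b * c) * (a * d + b * c))
    with ((a*a+b*b)*(c*c+d*d)) by ring. rewrite H1, H2; ring.
Qed.

Lemma S2_conj x : S2 x -> S2 (conj2 x).
Proof. destruct x as [a b]; unfold S2, inSpin2, conj2; simpl; intros; lra. Qed.

Lemma conj2_invol x : conj2 (conj2 x) = x.
Proof. apply c2eq; unfold conj2; simpl; ring. Qed.

Lemma conj2_mul x y : conj2 (c2mul x y) = c2mul (conj2 x) (conj2 y).
Proof. apply c2eq; unfold conj2, c2mul; simpl; ring. Qed.

Lemma c2dist_conj x y : c2dist (conj2 x) (conj2 y) = c2dist x y.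
Proof.
  destruct x as [a b], y as [c d]; unfold c2dist, conj2; simpl.
  replace (- b - - d) with (- (b - d)) by ring. rewrite Rabs_Ropp; reflexivity.
Qed.

Lemma sq_one x : S2 x -> c2mul x x = c2one -> x = c2one \/ x = m1.
Proof.
  destruct x as [a b]; unfold S2, inSpin2, c2mul, c2one, m1; simpl; intros H E1.
  injection E1; intros H2 H1.
  assert (b = 0) by nra. subst b.
  assert ((a - 1) * (a + 1) = 0) by nra.
  destruct (Rmult_integral _ _ H0); [left | right]; apply c2eq; simpl; lra.
Qed.

Lemma sq_m1 x : S2 x -> c2mul x x = m1 -> x = ii \/ x = (0, -1).
Proof.
  destruct x as [a b]; unfold S2, inSpin2, c2mul, m1, ii; simpl; intros H E1.
  injection E1; intros H2 H1.
  assert (a = 0) by nra. subst a.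
  assert ((b - 1) * (b + 1) = 0) by nra.
  destruct (Rmult_integral _ _ H0); [left | right]; apply c2eq; simpl; lra.
Qed.

Lemma sq_eq x y : S2 x -> S2 y -> c2mul x x = c2mul y y ->
  y = x \/ y = (- fst x, - snd x).
Proof.
  destruct x as [a b], y as [c d]; unfold S2, inSpin2, c2mul; simpl; intros H1 H2 E1.
  injection E1; intros F2 F1.
  set (w := (c * a + d * b, d * a - c * b)).
  assert (Sw : S2 w).
  { unfold S2, inSpin2, w; simpl.
    replace ((c * a + d * b) * (c * a + d * b) + (d * a - c * b) * (d * a - c * b))
      with ((c*c+d*d)*(a*a+b*b)) by ring. rewrite H1, H2; ring. }
  assert (Ww : c2mul w w = c2one).
  { apply c2eq; unfold w, c2mul, c2one; simpl.
    - replace ((c * a + d * b) * (c * a + d * b) - (d * a - c * b) * (d * a - c * b))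
        with ((c*c-d*d)*(a*a-b*b) + 4*(a*b)*(c*d)) by ring.
      replace (c*c-d*d) with (a*a-b*b) by lra.
      replace (c*d) with (a*b) by lra.
      replace ((a * a - b * b) * (a * a - b * b) + 4 * (a * b) * (a * b))
        with ((a*a+b*b)*(a*a+b*b)) by ring. rewrite H1; ring.
    - replace ((c * a + d * b) * (d * a - c * b) + (d * a - c * b) * (c * a + d * b))
        with (2*((c*d)*(a*a-b*b) - (a*b)*(c*c-d*d))) by ring.
      replace (c*c-d*d) with (a*a-b*b) by lra.
      replace (c*d) with (a*b) by lra. ring. }
  assert (Hy : (c, d) = c2mul w (a, b)).
  { apply c2eq; unfold w, c2mul; simpl.
    - replace ((c * a + d * b) * a - (d * a - c * b) * b) with (c * (a*a+b*b)) by ring.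
      rewrite H1; ring.
    - replace ((c * a + d * b) * b + (d * a - c * b) * a) with (d * (a*a+b*b)) by ring.
      rewrite H1; ring. }
  destruct (sq_one w Sw Ww) as [Hw | Hw]; rewrite Hy, Hw; [left | right];
    apply c2eq; unfold c2mul, c2one, m1; simpl; ring.
Qed.

Definition good (th : C2 -> C2) : Prop :=
  (forall x, S2 x -> S2 (th x)) /\
  (forall x y, S2 x -> S2 y -> th (c2mul x y) = c2mul (th x) (th y)) /\
  (forall x y, S2 x -> S2 y -> th x = th y -> x = y) /\
  (forall x, S2 x -> forall eps, eps > 0 -> exists delta, delta > 0 /\
      forall y, S2 y -> c2dist x y < delta -> c2dist (th x) (th y) < eps).

Lemma S2_one : S2 c2one. Proof. unfold S2, inSpin2, c2one; simpl; lra. Qed.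
Lemma S2_m1 : S2 m1. Proof. unfold S2, inSpin2, m1; simpl; lra. Qed.
Lemma S2_ii : S2 ii. Proof. unfold S2, inSpin2, ii; simpl; lra. Qed.

Lemma th_one th : good th -> th c2one = c2one.
Proof.
  intros [G1 [G2 _]].
  assert (H : th c2one = c2mul (th c2one) (th c2one)).
  { rewrite <- G2 by apply S2_one. f_equal. apply c2eq; unfold c2mul, c2one; simpl; ring. }
  pose proof (G1 c2one S2_one) as Hs. destruct (th c2one) as [a b].
  unfold S2, inSpin2 in Hs; unfold c2mul in H; simpl in *.
  injection H; intros H2 H1.
  assert (b = 0) by nra. subst b.
  apply c2eq; unfold c2one; simpl; nra.
Qed.

Lemma th_m1 th : good th -> th m1 = m1.
Proof.
  intros G. pose proof (th_one th G) as T1. destruct G as [G1 [G2 [G3 _]]].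
  assert (H : c2mul (th m1) (th m1) = c2one).
  { rewrite <- G2 by apply S2_m1. rewrite <- T1. f_equal.
    apply c2eq; unfold c2mul, c2one, m1; simpl; ring. }
  destruct (sq_one _ (G1 _ S2_m1) H) as [H1 | H1]; auto.
  rewrite <- T1 in H1. apply G3 in H1; [| apply S2_m1 | apply S2_one].
  unfold m1, c2one in H1. injection H1; intros; lra.
Qed.

Lemma th_ii th : good th -> th ii = ii \/ th ii = (0, -1).
Proof.
  intros G. pose proof (th_m1 th G) as T1. destruct G as [G1 [G2 [G3 _]]].
  apply sq_m1; [apply G1, S2_ii |].
  rewrite <- G2 by apply S2_ii. rewrite <- T1. f_equal.
  apply c2eq; unfold c2mul, ii, m1; simpl; ring.
Qed.
Lemma S2_E t : S2 (E t).
Proof. unfold S2, inSpin2, E; simpl. pose proof (sin2_cos2 t). unfold Rsqr in H. lra. Qed.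

Lemma E_add s t : c2mul (E s) (E t) = E (s + t).
Proof. unfold E, c2mul; simpl. rewrite cos_plus, sin_plus. apply c2eq; simpl; ring. Qed.

Lemma E_cont t eps : eps > 0 -> exists d, d > 0 /\
  forall s, Rabs (s - t) < d -> c2dist (E t) (E s) < eps.
Proof.
  intros He.
  pose proof (continuity_cos t) as Hc. pose proof (continuity_sin t) as Hs.
  unfold continuity_pt, continue_in, limit1_in, limit_in in Hc, Hs; simpl in Hc, Hs.
  destruct (Hc (eps/2)) as [a1 [Ha1 Hc1]]; [lra|].
  destruct (Hs (eps/2)) as [a2 [Ha2 Hs1]]; [lra|].
  exists (Rmin a1 a2); split; [apply Rmin_pos; lra|].
  intros s Hst. unfold c2dist, E; simpl.
  destruct (Req_dec s t) as [-> | Hne].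
  { unfold Rminus; rewrite !Rplus_opp_r, Rabs_R0; lra. }
  assert (D1 : R_dist (cos s) (cos t) < eps/2).
  { apply Hc1; split; [split; [exact I | auto] |]. unfold R_dist.
    pose proof (Rmin_l a1 a2); lra. }
  assert (D2 : R_dist (sin s) (sin t) < eps/2).
  { apply Hs1; split; [split; [exact I | auto] |]. unfold R_dist.
    pose proof (Rmin_r a1 a2); lra. }
  unfold R_dist in D1, D2. rewrite Rabs_minus_sym in D1, D2. lra.
Qed.

Lemma th_cont_pt th : good th -> forall a, continuity_pt (fun s => snd (th (E s))) a.
Proof.
  intros G a. destruct G as [_ [_ [_ G4]]].
  unfold continuity_pt, continue_in, limit1_in, limit_in; simpl; unfold R_dist.
  intros eps He.
  destruct (G4 (E a) (S2_E a) eps He) as [d1 [Hd1 Hc]].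
  destruct (E_cont a d1 Hd1) as [d [Hd Hd']].
  exists d; split; auto. intros x [_ Hx].
  specialize (Hc (E x) (S2_E x) (Hd' x Hx)).
  unfold c2dist in Hc. rewrite Rabs_minus_sym.
  pose proof (Rabs_pos (fst (th (E a)) - fst (th (E x)))). lra.
Qed.

Lemma E_PI2 : E (PI/2) = ii.
Proof. unfold E, ii. rewrite cos_PI2, sin_PI2. reflexivity. Qed.
Lemma E_PI : E PI = m1.
Proof. unfold E, m1. rewrite cos_PI, sin_PI. reflexivity. Qed.
Lemma E_0 : E 0 = c2one.
Proof. unfold E, c2one. rewrite cos_0, sin_0. reflexivity. Qed.

Lemma th_zero th : good th -> forall t, 0 < t < PI -> snd (th (E t)) <> 0.
Proof.
  intros G t Ht Hz.
  pose proof (th_one th G) as T1. pose proof (th_m1 th G) as Tm.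
  destruct G as [G1 [G2 [G3 G4]]].
  pose proof (G1 _ (S2_E t)) as Hs.
  assert (Hsin : sin t > 0) by (apply sin_gt_0; lra).
  assert (H : th (E t) = c2one \/ th (E t) = m1).
  { destruct (th (E t)) as [a b]. unfold S2, inSpin2 in Hs; simpl in *. subst b.
    assert ((a - 1) * (a + 1) = 0) by nra.
    destruct (Rmult_integral _ _ H); [left | right]; apply c2eq; simpl; lra. }
  destruct H as [H | H].
  - rewrite <- T1 in H. apply G3 in H; [| apply S2_E | apply S2_one].
    unfold E, c2one in H. injection H; intros; lra.
  - rewrite <- Tm in H. apply G3 in H; [| apply S2_E | apply S2_m1].
    unfold E, m1 in H. injection H; intros; lra.
Qed.

Lemma th_upper th : good th -> th ii = ii -> forall t, 0 < t < PI -> 0 < snd (th (E t)).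
Proof.
  intros G Hi t Ht.
  pose proof PI_RGT_0.
  assert (Hh : snd (th (E (PI/2))) = 1) by (rewrite E_PI2, Hi; reflexivity).
  destruct (Rlt_le_dec 0 (snd (th (E t)))) as [|Hle]; auto. exfalso.
  destruct (Req_dec (snd (th (E t))) 0) as [Hz|Hnz].
  { exact (th_zero th G t Ht Hz). }
  assert (Hneg : snd (th (E t)) < 0) by lra.
  destruct (total_order_T t (PI/2)) as [[Hlt | Heq] | Hgt].
  - destruct (IVT_interv (fun s => snd (th (E s))) t (PI/2)) as [z [Hz1 Hz2]];
      auto; try lra.
    + intros; apply th_cont_pt; auto.
    + apply (th_zero th G z); auto; lra.
  - subst t. lra.
  - destruct (IVT_interv (fun s => - snd (th (E s))) (PI/2) t) as [z [Hz1 Hz2]];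
      auto; try lra.
    + intros; apply continuity_pt_opp; apply th_cont_pt; auto.
    + apply (th_zero th G z); auto; lra.
Qed.

Lemma pow2_pos k : 0 < 2 ^ k.
Proof. apply pow_lt; lra. Qed.

Lemma th_dy th : good th -> th ii = ii -> forall k, th (E (PI / 2 ^ k)) = E (PI / 2 ^ k).
Proof.
  intros G Hi k. pose proof PI_RGT_0 as HP.
  induction k as [|k IH].
  - replace (PI / 2 ^ 0) with PI by (simpl; field). rewrite E_PI. apply th_m1; auto.
  - set (u := PI / 2 ^ S k).
    pose proof (pow2_pos k) as Hk. pose proof (pow_R1_Rle 2 k ltac:(lra)) as Hk1.
    assert (Hu : 0 < u < PI).
    { unfold u; simpl. split.
      - apply Rdiv_lt_0_compat; lra.
      - apply (Rmult_lt_reg_r (2 * 2 ^ k)); [lra|].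
        unfold Rdiv; rewrite Rmult_assoc, Rinv_l by lra. nra. }
    assert (Huu : E u = E u) by reflexivity.
    assert (Hsq : c2mul (E u) (E u) = E (PI / 2 ^ k)).
    { rewrite E_add. f_equal. unfold u; simpl; field; lra. }
    pose proof G as G'. destruct G' as [G1 [G2 [G3 G4]]].
    assert (H : c2mul (th (E u)) (th (E u)) = c2mul (E u) (E u)).
    { rewrite <- G2 by apply S2_E. rewrite Hsq, IH. reflexivity. }
    destruct (sq_eq (E u) (th (E u)) (S2_E u) (G1 _ (S2_E u)) (eq_sym H)) as [H1 | H1]; auto.
    exfalso. pose proof (th_upper th G Hi u Hu). rewrite H1 in H0. unfold E in H0; simpl in H0.
    pose proof (sin_gt_0 u ltac:(lra) ltac:(lra)). lra.
Qed.

Lemma th_dym th : good th -> th ii = ii -> forall k m,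
  th (E (INR m * (PI / 2 ^ k))) = E (INR m * (PI / 2 ^ k)).
Proof.
  intros G Hi k m. induction m as [|m IH].
  - simpl. rewrite Rmult_0_l, E_0. apply th_one; auto.
  - rewrite S_INR. replace ((INR m + 1) * (PI / 2 ^ k)) with (INR m * (PI / 2 ^ k) + PI / 2 ^ k) by ring.
    rewrite <- E_add. destruct G as [G1 [G2 G3]].
    rewrite G2 by apply S2_E. rewrite IH, th_dy; auto. split; auto.
Qed.

Lemma angle x : S2 x -> exists t, 0 <= t /\ E t = x.
Proof.
  destruct x as [a b]; unfold S2, inSpin2; simpl; intros H.
  assert (Ha : -1 <= a <= 1) by nra.
  pose proof (acos_bound a) as Hb. pose proof PI_RGT_0.
  assert (Hq : 1 - a² = b²) by (unfold Rsqr; lra).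
  destruct (Rle_lt_dec 0 b) as [Hb0 | Hb0].
  - exists (acos a); split; [lra|]. unfold E. rewrite cos_acos, sin_acos by auto.
    rewrite Hq, sqrt_Rsqr by auto. reflexivity.
  - exists (2 * PI - acos a); split; [lra|]. unfold E.
    rewrite cos_minus, sin_minus, cos_2PI, sin_2PI, cos_acos, sin_acos by auto.
    rewrite Hq, Rsqr_neg, sqrt_Rsqr by lra. apply c2eq; simpl; ring.
Qed.

Lemma INR_le_pow2 n : INR n <= 2 ^ n.
Proof.
  induction n as [|n IH]; [simpl; lra|].
  rewrite S_INR. change (2 ^ S n) with (2 * 2 ^ n). pose proof (pow_R1_Rle 2 n ltac:(lra)). lra.
Qed.

Lemma small_zero d : (forall eps, eps > 0 -> Rabs d < eps) -> d = 0.
Proof.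
  intros H. destruct (Req_dec d 0) as [|Hn]; auto.
  specialize (H (Rabs d) (Rabs_pos_lt d Hn)). lra.
Qed.

Lemma th_fix th : good th -> th ii = ii -> forall x, S2 x -> th x = x.
Proof.
  intros G Hi x Hx.
  destruct (angle x Hx) as [t [Ht0 Ht]].
  assert (Main : forall eps, eps > 0 -> c2dist (th x) x < eps).
  { intros eps He.
    pose proof G as G'. destruct G' as [G1 [G2 [G3 G4]]].
    destruct (G4 x Hx (eps/2) ltac:(lra)) as [d1 [Hd1 Hc]].
    destruct (E_cont t (Rmin d1 (eps/2))) as [d [Hd Hd']]; [apply Rmin_pos; lra|].
    destruct (archimed (PI / d)) as [Hu1 _].
    set (k := Z.to_nat (up (PI / d))).
    assert (Hk : PI / 2 ^ k < d).
    { pose proof PI_RGT_0. pose proof (pow2_pos k).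
      assert (PI / d < 2 ^ k).
      { apply Rlt_le_trans with (IZR (up (PI / d))); auto.
        apply Rle_trans with (INR k); [|apply INR_le_pow2].
        unfold k. rewrite INR_IZR_INZ, Z2Nat.id; [lra|].
        apply le_IZR. assert (0 < PI / d) by (apply Rdiv_lt_0_compat; lra). lra. }
      apply (Rmult_lt_reg_r (2 ^ k)); auto. unfold Rdiv.
      rewrite Rmult_assoc, Rinv_l by lra.
      apply (Rmult_lt_reg_r (/ d)); [apply Rinv_0_lt_compat; lra|].
      replace (d * 2 ^ k * / d) with (2 ^ k) by (field; lra). lra. }
    set (h := PI / 2 ^ k).
    assert (Hh : 0 < h) by (apply Rdiv_lt_0_compat; [apply PI_RGT_0 | apply pow2_pos]).
    destruct (archimed (t / h)) as [Hv1 Hv2].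
    set (m := Z.to_nat (up (t / h))).
    assert (Hm : INR m = IZR (up (t / h))).
    { unfold m. rewrite INR_IZR_INZ, Z2Nat.id; auto.
      apply le_IZR. assert (0 <= t / h) by (unfold Rdiv; apply Rmult_le_pos; [lra | left; apply Rinv_0_lt_compat; lra]). lra. }
    assert (Hs : Rabs (INR m * h - t) < d).
    { rewrite Hm. replace t with ((t / h) * h) at 2 by (field; lra).
      rewrite Rabs_right; [|nra].
      apply Rle_lt_trans with h; [nra | exact Hk]. }
    specialize (Hd' _ Hs). rewrite Ht in Hd'.
    assert (Hy := th_dym th G Hi k m). fold h in Hy.
    specialize (Hc (E (INR m * h)) (S2_E _) ltac:(pose proof (Rmin_l d1 (eps/2)); lra)).
    rewrite Hy in Hc.
    assert (c2dist x (E (INR m * h)) < eps / 2) by (pose proof (Rmin_r d1 (eps/2)); lra).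
    destruct (E (INR m * h)) as [c e]. destruct (th x) as [p q]. destruct x as [a b].
    unfold c2dist in *; simpl in *.
    pose proof (Rabs_triang (p - c) (c - a)). pose proof (Rabs_triang (q - e) (e - b)).
    replace (p - c + (c - a)) with (p - a) in H0 by ring.
    replace (q - e + (e - b)) with (q - b) in H1 by ring.
    rewrite (Rabs_minus_sym a c), (Rabs_minus_sym b e) in H. lra. }
  apply c2eq; apply Rminus_diag_uniq; apply small_zero; intros eps He;
    specialize (Main eps He); unfold c2dist in Main;
    pose proof (Rabs_pos (fst (th x) - fst x)); pose proof (Rabs_pos (snd (th x) - snd x)); lra.
Qed.

Lemma classify th : good th ->
  exists b : bool, forall x, S2 x -> th x = (if b then x else conj2 x).
Proof.
  intros G. destruct (th_ii th G) as [Hi | Hi].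
  - exists true; apply th_fix; auto.
  - exists false.
    set (th' := fun x => conj2 (th x)).
    assert (G' : good th').
    { destruct G as [G1 [G2 [G3 G4]]]. unfold th'. repeat split.
      - intros; apply S2_conj; auto.
      - intros; rewrite G2 by auto; apply conj2_mul.
      - intros x y Hx Hy H. apply G3; auto.
        rewrite <- (conj2_invol (th x)), H, conj2_invol; reflexivity.
      - intros x Hx eps He. destruct (G4 x Hx eps He) as [d [Hd Hc]].
        exists d; split; auto; intros; rewrite c2dist_conj; auto. }
    assert (Hi' : th' ii = ii).
    { unfold th'; rewrite Hi. apply c2eq; unfold conj2, ii; simpl; ring. }
    intros x Hx. pose proof (th_fix th' G' Hi' x Hx) as H. unfold th' in H.
    rewrite <- (conj2_invol (th x)), H; reflexivity.
Qed.

Definition cf (b : bool) (x : C2) : C2 := if b then x else conj2 x.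

Definition emb_ok (emb : C2 -> Amb) (proj : Amb -> C2) : Prop :=
  (forall x, proj (emb x) = x) /\
  (forall x y, amul (emb x) (emb y) = emb (c2mul x y)) /\
  (forall x y, adist (emb x) (emb y) = c2dist x y).

Lemma classify_emb b f emb proj : emb_ok emb proj -> mono_into b f ->
  same_image f emb -> cont_on_Spin2 f ->
  exists b1 : bool, forall x, S2 x -> f x = emb (cf b1 x).
Proof.
  intros [P1 [P2 P3]] [M1 [M2 M3]] Hsi Hc.
  assert (K : forall x, S2 x -> S2 (proj (f x)) /\ f x = emb (proj (f x))).
  { intros x Hx. destruct (proj1 (Hsi (f x)) (ex_intro _ x (conj Hx eq_refl))) as [y [Hy Hy']].
    rewrite <- Hy', P1. auto. }
  set (th := fun x => proj (f x)).
  assert (G : good th).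
  { unfold th; repeat split.
    - intros; apply K; auto.
    - intros x y Hx Hy. rewrite M2 by auto.
      rewrite (proj2 (K x Hx)), (proj2 (K y Hy)), P2, P1.
      rewrite <- (proj2 (K x Hx)), <- (proj2 (K y Hy)). reflexivity.
    - intros x y Hx Hy H. apply M3; auto.
      rewrite (proj2 (K x Hx)), (proj2 (K y Hy)), H; reflexivity.
    - intros x Hx eps He. destruct (Hc x Hx eps He) as [d [Hd Hd']].
      exists d; split; auto. intros y Hy Hxy. specialize (Hd' y Hy Hxy).
      rewrite (proj2 (K x Hx)), (proj2 (K y Hy)), P3 in Hd'. exact Hd'. }
  destruct (classify th G) as [b1 Hb1]. exists b1. intros x Hx.
  rewrite (proj2 (K x Hx)). fold (th x). rewrite Hb1 by auto. destruct b1; reflexivity.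
Qed.

Definition proj12 (z : Amb) : C2 := match z with AQ u => (s0 u, s12 u) | _ => c2one end.
Definition proj23 (z : Amb) : C2 := match z with AQ u => (s0 u, s23 u) | _ => c2one end.
Definition projP1 (z : Amb) : C2 := match z with AP x _ => x | _ => c2one end.
Definition projP2 (z : Amb) : C2 := match z with AP _ y => y | _ => c2one end.

Lemma c2dist_one : c2dist c2one c2one = 0.
Proof. unfold c2dist, c2one; simpl. unfold Rminus; rewrite !Rplus_opp_r, Rabs_R0; ring. Qed.

Lemma c2mul_one : c2mul c2one c2one = c2one.
Proof. apply c2eq; unfold c2mul, c2one; simpl; ring. Qed.

Lemma ok12 : emb_ok eps12 proj12.
Proof.
  split; [|split].
  - intros [a b]; reflexivity.
  - intros [a b] [c d]; unfold eps12, amul, ev3mul, c2mul; simpl; f_equal; f_equal; ring.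
  - intros [a b] [c d]; unfold eps12, adist, ev3dist, c2dist; simpl.
    unfold Rminus; rewrite Rplus_opp_r, Rabs_R0; ring.
Qed.

Lemma ok23 : emb_ok eps23 proj23.
Proof.
  split; [|split].
  - intros [a b]; reflexivity.
  - intros [a b] [c d]; unfold eps23, amul, ev3mul, c2mul; simpl; f_equal; f_equal; ring.
  - intros [a b] [c d]; unfold eps23, adist, ev3dist, c2dist; simpl.
    unfold Rminus; rewrite Rplus_opp_r, Rabs_R0; ring.
Qed.

Lemma okP1 : emb_ok iota1 projP1.
Proof.
  split; [|split].
  - intros; reflexivity.
  - intros; unfold iota1, amul; rewrite c2mul_one; reflexivity.
  - intros; unfold iota1, adist; rewrite c2dist_one; ring.
Qed.

Lemma okP2 : emb_ok iota2 projP2.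
Proof.
  split; [|split].
  - intros; reflexivity.
  - intros; unfold iota2, amul; rewrite c2mul_one; reflexivity.
  - intros; unfold iota2, adist; rewrite c2dist_one; ring.
Qed.

Definition sg (b : bool) (r : R) : R := if b then r else - r.

Definition alphaE (b1 b2 : bool) (z : Amb) : Amb :=
  match z with
  | AQ u => AQ (mkEv3 (s0 u) (sg b1 (s12 u)) (sg b2 (s23 u)) (sg b1 (sg b2 (s31 u))))
  | AP x y => AP x y
  end.

Definition alphaP (b1 b2 : bool) (z : Amb) : Amb :=
  match z with
  | AQ u => AQ u
  | AP x y => AP (cf b1 x) (cf b2 y)
  end.

Lemma iso_of_invol b a :
  (forall z, inG b z -> inG b (a z)) ->
  (forall z w, inG b z -> inG b w -> a (amul z w) = amul (a z) (a w)) ->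
  (forall z, a (a z) = z) -> group_iso b b a.
Proof.
  intros H1 H2 H3. repeat split; auto.
  - intros z w _ _ H. rewrite <- (H3 z), H, H3; reflexivity.
  - intros w Hw. exists (a w); split; auto.
Qed.

Lemma alphaE_iso b b1 b2 : group_iso b b (alphaE b1 b2).
Proof.
  apply iso_of_invol.
  - intros [[a r p q] | x y]; simpl; auto. intros [Hb Hs]; split; auto.
    unfold inSpin3 in *; simpl in *. destruct b1, b2; simpl; rewrite <- Hs; ring.
  - intros [[a r p q] | x y] [[a' r' p' q'] | x' y']; simpl; intros H1 H2;
      try (destruct H1 as [H1 _]; destruct H2 as [H2 _]; congruence); auto.
    unfold ev3mul; simpl. destruct b1, b2; simpl; f_equal; f_equal; ring.
  - intros [[a r p q] | x y]; simpl; auto. destruct b1, b2; simpl; f_equal; f_equal; ring.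
Qed.

Lemma cf_S2 b x : S2 x -> S2 (cf b x).
Proof. destruct b; simpl; auto using S2_conj. Qed.

Lemma cf_invol b x : cf b (cf b x) = x.
Proof. destruct b; simpl; auto using conj2_invol. Qed.

Lemma alphaP_iso b b1 b2 : group_iso b b (alphaP b1 b2).
Proof.
  apply iso_of_invol.
  - intros [u | x y]; simpl; auto. intros [Hb [H1 H2]]; split; [auto | split; apply cf_S2; auto].
  - intros [u | x y] [u' | x' y']; simpl; intros H1 H2;
      try (destruct H1 as [H1 _]; destruct H2 as [H2 _]; congruence); auto.
    destruct b1, b2; simpl; rewrite ?conj2_mul; reflexivity.
  - intros [u | x y]; simpl; auto. rewrite !cf_invol; reflexivity.
Qed.

Lemma alphaE_12 b1 b2 x : alphaE b1 b2 (eps12 (cf b1 x)) = eps12 x.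
Proof. destruct x as [a b]; destruct b1, b2; unfold eps12, cf, conj2; simpl; f_equal; f_equal; ring. Qed.
Lemma alphaE_23 b1 b2 x : alphaE b1 b2 (eps23 (cf b2 x)) = eps23 x.
Proof. destruct x as [a b]; destruct b1, b2; unfold eps23, cf, conj2; simpl; f_equal; f_equal; ring. Qed.
Lemma alphaP_1 b1 b2 x : alphaP b1 b2 (iota1 (cf b1 x)) = iota1 x.
Proof.
  unfold iota1, alphaP. rewrite cf_invol. f_equal.
  destruct b2; [reflexivity|]. apply c2eq; unfold conj2, c2one; simpl; ring.
Qed.
Lemma alphaP_2 b1 b2 x : alphaP b1 b2 (iota2 (cf b2 x)) = iota2 x.
Proof.
  unfold iota2, alphaP. rewrite cf_invol. f_equal.
  destruct b1; [reflexivity|]. apply c2eq; unfold conj2, c2one; simpl; ring.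
Qed.

Theorem mainTheorem7
  (V : Type) (E : V -> V -> bool)
  (HEsym : forall u v, E u v = E v u)
  (HEirr : forall v, E v v = false)
  (n : nat) (sigma : nat -> V)
  (Hsig_inj : forall i j, (i < n)%nat -> (j < n)%nat -> sigma i = sigma j -> i = j)
  (Hsig_surj : forall v, exists i, (i < n)%nat /\ sigma i = v)
  (phi : nat -> nat -> C2 -> Amb)
  (Hamal : is_Spin2_amalgam n (fun i j => E (sigma i) (sigma j)) phi)
  (Hcont : continuous_amalgam n phi) :
  amalgam_iso n (fun i j => E (sigma i) (sigma j)) phi
    (std_amalgam (fun i j => E (sigma i) (sigma j))).
Proof.
  assert (H : forall ij : nat * nat, exists a : Amb -> Amb,
    let i := fst ij in let j := snd ij in
    (i < j)%nat -> (j < n)%nat ->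
      group_iso (E (sigma i) (sigma j)) (E (sigma i) (sigma j)) a /\
      (forall x, inSpin2 x -> a (phi i j x) = std_amalgam (fun i j => E (sigma i) (sigma j)) i j x) /\
      (forall x, inSpin2 x -> a (phi j i x) = std_amalgam (fun i j => E (sigma i) (sigma j)) j i x)).
  { intros [i j]; simpl.
    destruct (Nat.lt_ge_cases i j) as [Hij | Hij]; [| exists (fun z => z); intros; lia].
    destruct (Nat.lt_ge_cases j n) as [Hjn | Hjn]; [| exists (fun z => z); intros; lia].
    destruct (Hamal i j Hij Hjn) as [M1 [M2 Hif]]. cbv beta in M1, M2, Hif.
    assert (C1 := Hcont i j ltac:(lia) Hjn ltac:(lia)).
    assert (C2' := Hcont j i Hjn ltac:(lia) ltac:(lia)).
    unfold std_amalgam.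
    rewrite (proj2 (Nat.ltb_lt i j) Hij), (proj2 (Nat.ltb_ge j i) ltac:(lia)).
    destruct (E (sigma i) (sigma j)) eqn:He.
    - destruct Hif as [S1 S2'].
      destruct (classify_emb _ _ _ _ ok12 M1 S1 C1) as [b1 Hb1].
      destruct (classify_emb _ _ _ _ ok23 M2 S2' C2') as [b2 Hb2].
      exists (alphaE b1 b2). intros _ _. split; [apply alphaE_iso|]. split.
      + intros x Hx. rewrite Hb1 by auto. apply alphaE_12.
      + intros x Hx. rewrite Hb2 by auto. apply alphaE_23.
    - destruct Hif as [S1 S2'].
      destruct (classify_emb _ _ _ _ okP1 M1 S1 C1) as [b1 Hb1].
      destruct (classify_emb _ _ _ _ okP2 M2 S2' C2') as [b2 Hb2].
      exists (alphaP b1 b2). intros _ _. split; [apply alphaP_iso|]. split.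
      + intros x Hx. rewrite Hb1 by auto. apply alphaP_1.
      + intros x Hx. rewrite Hb2 by auto. apply alphaP_2. }
  destruct (functional_choice _ H) as [f Hf].
  exists (fun i => i), (fun i j => f (i, j)). split.
  - split; auto.
  - intros i j Hij Hjn. exact (Hf (i, j) Hij Hjn).
Qed.
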